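(* Let $P$ be a positive event pattern and $I$ an event stream. Run the following algorithm: set $V := \emptyset$ and $final\_count := 0$; process the events of $I$ one at a time in nondecreasing order of time; for an event $e$ of type $E$, let $Pr := \{p \in V : p.type \in predTypes(E),\ p.time < e.time\}$; if $E = start(P)$ or $Pr \neq \emptyset$, then add $e$ to $V$, set $e.count := [E = start(P)] + \sum_{p \in Pr} p.count$ (where $[\cdot]$ is $1$ if true and $0$ otherwise), and, if $E = end(P)$, increase $final\_count$ by $e.count$; finally return $final\_count$. Then for every event $e$ added to $V$, $e.count$ equals the number of sequences $(e_1,\dots,e_m)$, $m\ge 1$, of events of $I$ with $e_m = e$, $e_1.type = start(P)$, $e_1.time < e_2.time < \dots < e_m.time$ and $e_l.type \in predTypes(e_{l+1}.type)$ for all $1 \le l < m$ (i.e., the number of sub-trends from a START event to $e$ in the GRETA graph), and the returned value $final\_count$ equals the number of event trends matched by $P$ in $I$.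
   Context: Events: each event $e$ has an event type $e.type$ and an occurrence time $e.time \in \mathbb{Q}_{\ge 0}$. An event stream $I$ is a finite collection of distinct events arriving in nondecreasing order of time. Positive patterns: an event type $E$ is a pattern; if $P_i,P_j$ are patterns then $P_i+$ and $\mathsf{SEQ}(P_i,P_j)$ are patterns; each event type occurs at most once in a pattern. Matches over $I$: $matches(E)=\{(e): e\in I, e.type=E\}$; $(e_1,\dots,e_k)\in matches(\mathsf{SEQ}(P_i,P_j))$ iff for some $1\le m\le k$, $(e_1,\dots,e_m)\in matches(P_i)$, $(e_{m+1},\dots,e_k)\in matches(P_j)$ and $e_1.time<\dots<e_k.time$; $matches(P_i+)$ consists of concatenations $s_1\cdots s_k$ ($k\ge1$) with each $s_l\in matches(P_i)$ and the last event of $s_l$ strictly earlier than the first event of $s_{l+1}$. Event trends matched by $P$ in $I$ are the elements of $matches(P)$. Define $start(E)=end(E)=E$, $start(P_i+)=start(P_i)$, $end(P_i+)=end(P_i)$, $start(\mathsf{SEQ}(P_i,P_j))=start(P_i)$, $end(\mathsf{SEQ}(P_i,P_j))=end(P_j)$. GRETA template of $P$: its states are the event types in $P$; for every sub-pattern $\mathsf{SEQ}(P_i,P_j)$ of $P$ there is a transition from $end(P_i)$ to $start(P_j)$, and for every sub-pattern $P_i+$ of $P$ there is a transition from $end(P_i)$ to $start(P_i)$. For an event type $E$, $predTypes(E)$ is the set of event types $E'$ such that the template has a transition from $E'$ to $E$. *)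

(* Defs.v *)
From mathcomp Require Import all_boot all_order all_algebra.
Set Implicit Arguments. Unset Strict Implicit. Unset Printing Implicit Defensive.
Import Order.TTheory GRing.Theory Num.Theory.

Inductive pat (T : Type) : Type :=
| PEv of T
| PPlus of pat T
| PSeq of pat T & pat T.
Arguments PEv {T}. Arguments PPlus {T}. Arguments PSeq {T}.

Section Defs.
Variables (T Ev : eqType) (ty : Ev -> T) (tm : Ev -> rat).

Fixpoint ptypes (P : pat T) : seq T :=
  match P with
  | PEv E => [:: E]
  | PPlus P1 => ptypes P1
  | PSeq P1 P2 => ptypes P1 ++ ptypes P2
  end.

Fixpoint pstart (P : pat T) : T :=
  match P with PEv E => E | PPlus P1 => pstart P1 | PSeq P1 _ => pstart P1 end.

Fixpoint pend (P : pat T) : T :=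
  match P with PEv E => E | PPlus P1 => pend P1 | PSeq _ P2 => pend P2 end.

Fixpoint trans (P : pat T) : seq (T * T) :=
  match P with
  | PEv _ => [::]
  | PPlus P1 => (pend P1, pstart P1) :: trans P1
  | PSeq P1 P2 => (pend P1, pstart P2) :: trans P1 ++ trans P2
  end.

(* E' \in predTypes(E) *)
Definition isPred (P : pat T) (E' E : T) : bool := (E', E) \in trans P.

Definition incr (s : seq Ev) : bool := sorted (fun a b => (tm a < tm b)%R) s.

Definition gapr (x y : seq Ev) : bool :=
  match rev x, y with
  | a :: _, b :: _ => (tm a < tm b)%R
  | _, _ => true
  end.

Fixpoint matches (I : seq Ev) (P : pat T) (s : seq Ev) : Prop :=
  match P with
  | PEv E => exists e, s = [:: e] /\ e \in I /\ ty e = E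
  | PSeq P1 P2 => exists s1 s2, s = s1 ++ s2 /\ matches I P1 s1 /\
                   matches I P2 s2 /\ incr s
  | PPlus P1 => exists ss : seq (seq Ev), ss != [::] /\ s = flatten ss /\
                   (forall x, x \in ss -> matches I P1 x) /\ sorted gapr ss
  end.

Definition subtrend (I : seq Ev) (P : pat T) (e : Ev) (s : seq Ev) : Prop :=
  (forall x, x \in s -> x \in I) /\
  (exists e1 rest, s = e1 :: rest /\ ty e1 = pstart P /\ last e1 rest = e) /\
  incr s /\ sorted (fun a b => isPred P (ty a) (ty b)) s.

Definition counts (A : seq Ev -> Prop) (n : nat) : Prop :=
  exists l : seq (seq Ev), uniq l /\ (forall s, s \in l <-> A s) /\ size l = n.

(* one step of the algorithm; state = (V with counts, final_count) *)
Definition step (P : pat T) (st : seq (Ev * nat) * nat) (e : Ev)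
  : seq (Ev * nat) * nat :=
  let Pr := [seq p <- st.1 | isPred P (ty p.1) (ty e) && (tm p.1 < tm e)%R] in
  if (ty e == pstart P) || (Pr != [::]) then
    let c := ((ty e == pstart P) : nat) + sumn [seq p.2 | p <- Pr] in
    ((e, c) :: st.1, if ty e == pend P then st.2 + c else st.2)
  else st.

Definition greta (P : pat T) (I : seq Ev) : seq (Ev * nat) * nat :=
  foldl (step P) ([::], 0) I.

End Defs.

(* Main.v *)
Require Import Defs.
From mathcomp Require Import all_boot all_order all_algebra.
Set Implicit Arguments. Unset Strict Implicit. Unset Printing Implicit Defensive.
Import Order.TTheory GRing.Theory Num.Theory.

Section Gen.
Variable X : Type.

Lemma path_closed2 (e e2 : rel X) (Q : pred X) x s :
  Q x -> path e x s -> (forall a b, Q a -> e a b -> e2 a b && Q b) ->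
  path e2 x s && Q (last x s).
Proof.
elim: s x => [|y s IH] x Qx //= /andP[exy ps] H.
have /andP[-> Qy] := H _ _ Qx exy.
exact: IH.
Qed.

Lemma split_first (r sp : rel X) x s : path r x s ->
  path (fun a b => r a b && ~~ sp a b) x s \/
  exists b' y c', s = b' ++ y :: c' /\
    path (fun a b => r a b && ~~ sp a b) x b' /\ r (last x b') y /\
    sp (last x b') y /\ path r y c'.
Proof.
elim: s x => [|y s IH] x /=; first by left.
move=> /andP[rxy ps].
have [spxy|nspxy] := boolP (sp x y).
  by right; exists [::], y, s.
case: (IH y ps) => [p|[b' [z [c' [-> [p1 [p2 [p3 p4]]]]]]]].
  by left; rewrite /= rxy p.
right; exists (y :: b'), z, c'; split => //=.
by rewrite rxy nspxy p1.
Qed.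

Lemma path_cat2 (r : rel X) x1 r1 x2 r2 :
  path r x1 (r1 ++ x2 :: r2) = [&& path r x1 r1, r (last x1 r1) x2 & path r x2 r2].
Proof. by rewrite cat_path /=. Qed.

End Gen.

Section Counts.
Variable Ev : eqType.

Lemma counts_ext (A B : seq Ev -> Prop) n :
  (forall s, A s <-> B s) -> counts A n -> counts B n.
Proof.
move=> H [l [u [m sz]]]; exists l; split => //; split => // s.
by split => [/m/H|/H/m].
Qed.

Lemma counts0 (A : seq Ev -> Prop) : (forall s, ~ A s) -> counts A 0.
Proof. by move=> H; exists [::]; split => //; split => // s; split => // /H. Qed.

Lemma counts1 (t : seq Ev) : counts (fun s => s = t) 1.
Proof.
exists [:: t]; split => //; split => // s; rewrite inE; split; by [move/eqP | move->].
Qed.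

Lemma counts_union (A B : seq Ev -> Prop) n m :
  counts A n -> counts B m -> (forall s, A s -> B s -> False) ->
  counts (fun s => A s \/ B s) (n + m).
Proof.
move=> [l1 [u1 [m1 s1]]] [l2 [u2 [m2 s2]]] D.
exists (l1 ++ l2); split; last split; last by rewrite size_cat s1 s2.
- rewrite cat_uniq u1 u2 /= andbT; apply/hasPn => x /m2 Bx.
  by apply/negP => /m1 Ax; apply: (D x).
- move=> s; rewrite mem_cat; split.
  + by case/orP => [/m1|/m2]; auto.
  + by case => [/m1|/m2] ->; rewrite ?orbT.
Qed.

Lemma counts_map (A : seq Ev -> Prop) (f : seq Ev -> seq Ev) n :
  injective f -> counts A n -> counts (fun s => exists t, A t /\ s = f t) n.
Proof.
move=> fi [l [u [m sz]]]; exists (map f l); split; last split; last by rewrite size_map.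
- by rewrite map_inj_uniq.
- move=> s; split.
  + by case/mapP => t /m At ->; exists t.
  + by case=> t [/m At ->]; apply: map_f.
Qed.

Lemma counts_sum (B : Ev -> seq Ev -> Prop) (L : seq (Ev * nat)) :
  uniq (map fst L) -> (forall p c, (p, c) \in L -> counts (B p) c) ->
  (forall p q s, B p s -> B q s -> p = q) ->
  counts (fun s => exists p c, (p, c) \in L /\ B p s) (sumn (map snd L)).
Proof.
elim: L => [|[p c] L IH] /=.
  by move=> _ _ _; apply: counts0 => s [p [c []]].
move=> /andP[pL u] H D.
have H1 : counts (B p) c by apply: H; rewrite inE eqxx.
have H2 : counts _ _ := IH u (fun q d qd => H q d (@mem_behead _ ((p,c)::L) _ qd)) D.
apply: counts_ext (counts_union H1 H2 _).
- move=> s; split.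
  + case=> [Bs|[q [d [qd Bs]]]]; first by exists p, c; rewrite inE eqxx.
    by exists q, d; rewrite inE qd orbT.
  + case=> [q [d]]; rewrite inE => [[/orP[/eqP[-> _]|qd] Bs]]; first by left.
    by right; exists q, d.
- move=> s Bs [q [d [qd Bq]]].
  have pq := D _ _ _ Bs Bq; subst q.
  by move/negP: pL; apply; apply/mapP; exists (p, d).
Qed.

End Counts.

Section Lang.
Variables (T Ev : eqType) (ty : Ev -> T) (tm : Ev -> rat) (I : seq Ev).

Definition good (P : pat T) (s : seq Ev) : Prop :=
  (forall x, x \in s -> x \in I) /\
  (exists e1 rest, s = e1 :: rest /\ ty e1 = pstart P /\ ty (last e1 rest) = pend P) /\
  incr tm s /\ sorted (fun a b => isPred P (ty a) (ty b)) s.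

Lemma pstart_in (P : pat T) : pstart P \in ptypes P.
Proof.
elim: P => [E|P1 IH|P1 IH1 P2 IH2] /=; first by rewrite inE.
  by [].
by rewrite mem_cat IH1.
Qed.

Lemma pend_in (P : pat T) : pend P \in ptypes P.
Proof.
elim: P => [E|P1 IH|P1 IH1 P2 IH2] /=; first by rewrite inE.
  by [].
by rewrite mem_cat IH2 orbT.
Qed.

Lemma isPred_types (P : pat T) a b :
  isPred P a b -> (a \in ptypes P) && (b \in ptypes P).
Proof.
rewrite /isPred; elim: P => [E|P1 IH|P1 IH1 P2 IH2] //=.
  rewrite inE => /orP[|H]; last exact: IH.
  by case/eqP => -> ->; rewrite pend_in pstart_in.
rewrite inE [_ \in trans _ ++ _]mem_cat => /orP[|/orP[] H].
- by case/eqP => -> ->; rewrite !mem_cat pend_in pstart_in orbT.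
- by case/andP: (IH1 H); rewrite !mem_cat => -> ->.
- by case/andP: (IH2 H); rewrite !mem_cat => -> ->; rewrite !orbT.
Qed.

Lemma isPred_plus (P1 : pat T) a b : isPred P1 a b -> isPred (PPlus P1) a b.
Proof. by rewrite /isPred /= inE => ->; rewrite orbT. Qed.
Lemma isPred_seq1 (P1 P2 : pat T) a b : isPred P1 a b -> isPred (PSeq P1 P2) a b.
Proof. by rewrite /isPred /= inE mem_cat => ->; rewrite orbT. Qed.
Lemma isPred_seq2 (P1 P2 : pat T) a b : isPred P2 a b -> isPred (PSeq P1 P2) a b.
Proof. by rewrite /isPred /= inE mem_cat => ->; rewrite !orbT. Qed.
Lemma isPred_plusX (P1 : pat T) : isPred (PPlus P1) (pend P1) (pstart P1).
Proof. by rewrite /isPred /= inE eqxx. Qed.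
Lemma isPred_seqX (P1 P2 : pat T) : isPred (PSeq P1 P2) (pend P1) (pstart P2).
Proof. by rewrite /isPred /= inE eqxx. Qed.
Lemma plus_nonsp (P1 : pat T) a b : isPred (PPlus P1) a b ->
  ~~ ((a == pend P1) && (b == pstart P1)) -> isPred P1 a b.
Proof. by rewrite /isPred /= inE xpair_eqE => /orP[->|]. Qed.
Lemma seq_cases (P1 P2 : pat T) a b : isPred (PSeq P1 P2) a b ->
  [\/ a = pend P1 /\ b = pstart P2, isPred P1 a b | isPred P2 a b].
Proof.
rewrite /isPred /= inE mem_cat => /orP[/eqP[-> ->]|/orP[]]; by [constructor 1|constructor 2|constructor 3].
Qed.

Lemma gapr_cons x1 r1 x2 r2 :
  gapr tm (x1 :: r1) (x2 :: r2) = (tm (last x1 r1) < tm x2)%R.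
Proof. by rewrite /gapr [x1 :: r1]lastI rev_rcons. Qed.

Lemma good_app P x1 r1 x2 r2 :
  (forall x, x \in x1 :: r1 -> x \in I) -> (forall x, x \in x2 :: r2 -> x \in I) ->
  ty x1 = pstart P -> ty (last x2 r2) = pend P ->
  incr tm (x1 :: r1) -> incr tm (x2 :: r2) -> (tm (last x1 r1) < tm x2)%R ->
  sorted (fun a b => isPred P (ty a) (ty b)) (x1 :: r1) ->
  sorted (fun a b => isPred P (ty a) (ty b)) (x2 :: r2) ->
  isPred P (ty (last x1 r1)) (ty x2) ->
  good P (x1 :: r1 ++ x2 :: r2).
Proof.
move=> i1 i2 hs he c1 c2 j p1 p2 jp; split.
  move=> x; rewrite -cat_cons mem_cat => /orP[/i1|/i2] //.
split; first by exists x1, (r1 ++ x2 :: r2); rewrite last_cat.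
split; first by move: c1 c2; rewrite /incr /= path_cat2 => -> ->; rewrite j.
by move: p1 p2; rewrite /= path_cat2 => -> ->; rewrite jp.
Qed.

Lemma matches_good P s : matches ty tm I P s -> good P s.
Proof.
elim: P s => [E|P1 IH|P1 IH1 P2 IH2] s /=.
- case=> e [-> [eI <-]]; split; first by move=> x; rewrite inE => /eqP ->.
  by split; first by exists e, [::].
- case=> ss [ssn [-> [Hm Hs]]].
  case: ss ssn Hm Hs => [//|b ss] _ Hm Hs.
  elim: ss b Hm Hs => [|b' ss IHs] b Hm Hs.
    have [Hi [[e1 [r [Eb [Hst Hen]]]] [Hin Hp]]] := IH _ (Hm b (mem_head _ _)).
    rewrite /= cats0; split => //; split; first by exists e1, r.
    split => //; subst b; apply: sub_path Hp => a c; exact: isPred_plus.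
  move: Hs => /= /andP[g Hs].
  have Hb := IH _ (Hm b (mem_head _ _)).
  have Hb' : good P1 b' by apply: IH; apply: Hm; rewrite !inE eqxx orbT.
  have : good (PPlus P1) (flatten (b' :: ss)).
    by apply: IHs Hs => x xi; apply: Hm; rewrite inE xi orbT.
  case: Hb => [i1 [[x1 [r1 [E1 [s1 e1]]]] [c1 p1]]].
  case: Hb' => [_ [[x2 [r2 [E2 _]]] _]].
  subst b b'.
  move=> [i2 [[y [r [E [s2 e2]]]] [c2 p2]]].
  move: E s2 i2 e2 c2 p2; rewrite /= => -[<- ->] s2 i2 e2 c2 p2.
  rewrite -cat_cons; apply: good_app => //.
  + by move: g; rewrite gapr_cons.
  + by apply: sub_path p1 => a c; exact: isPred_plus.
  + by rewrite e1 s2; exact: isPred_plusX.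
- case=> s1 [s2 [-> [m1 [m2 inc]]]].
  case: (IH1 _ m1) => [i1 [[x1 [r1 [E1 [s1' e1]]]] [c1 p1]]].
  case: (IH2 _ m2) => [i2 [[x2 [r2 [E2 [s2' e2]]]] [c2 p2]]].
  subst s1 s2.
  rewrite cat_cons; apply: (good_app i1 i2) => //.
  + by move: inc; rewrite /incr /= path_cat2 => /and3P[].
  + by apply: sub_path p1 => a c; exact: isPred_seq1.
  + by apply: sub_path p2 => a c; exact: isPred_seq2.
  + by rewrite e1 s2'; exact: isPred_seqX.
Qed.


Lemma incr_split x b' y c' : incr tm (x :: b' ++ y :: c') ->
  [/\ incr tm (x :: b'), (tm (last x b') < tm y)%R & incr tm (y :: c')].
Proof. by rewrite /incr /= path_cat2 => /and3P[]. Qed.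

Lemma good_matches P s : uniq (ptypes P) -> good P s -> matches ty tm I P s.
Proof.
elim: P s => [E|P1 IH|P1 IH1 P2 IH2] s U [Hi [[x [r [Es [Hs He]]]] [inc tp]]]; subst s.
- case: r Hi He tp inc => [|y r] Hi He tp inc.
    by exists x; split => //; split => //; apply: Hi; rewrite mem_head.
  by case/andP: tp; rewrite /isPred in_nil.
- suff key : forall n x r, size r < n -> good (PPlus P1) (x :: r) ->
      matches ty tm I (PPlus P1) (x :: r).
    by apply: (key (size r).+1) => //; split => //; split => //; exists x, r.
  clear Hi Hs He inc tp x r.
  elim=> [//|n IHn] x r Hr [Hi [[x' [r' [[<- <-] [Hs He]]]] [inc tp]]].
  have spl := @split_first _ (fun a b => isPred (PPlus P1) (ty a) (ty b))
     (fun a b => (ty a == pend P1) && (ty b == pstart P1)) x r tp.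
  case: spl => [p | [b' [y [c' [Er [p1 [p2 [p3 p4]]]]]]]].
    have m1 : matches ty tm I P1 (x :: r).
      apply: IH => //; split => //; split; first by exists x, r.
      split => //; apply: sub_path p => a c /andP[]; exact: plus_nonsp.
    exists [:: x :: r]; split => //; split; first by rewrite /= cats0.
    by split => // z; rewrite inE => /eqP ->.
  subst r; have [c1 j c2] := incr_split inc.
  case/andP: p3 => /eqP l1 /eqP s2.
  have m1 : matches ty tm I P1 (x :: b').
    apply: IH => //; split.
      by move=> z zi; apply: Hi; rewrite -cat_cons mem_cat zi.
    split; first by exists x, b'.
    split => //; apply: sub_path p1 => a c /andP[]; exact: plus_nonsp.
  have m2 : matches ty tm I (PPlus P1) (y :: c').
    apply: IHn.
      by move: Hr; rewrite size_cat /= addnS ltnS; apply: leq_ltn_trans; apply: leq_addl.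
    split; first by move=> z zi; apply: Hi; rewrite -cat_cons mem_cat zi orbT.
    split; first by exists y, c'; split => //; move: He; rewrite last_cat.
    by split.
  case: m2 => ss2 [ne2 [E2 [M2 S2]]].
  exists ((x :: b') :: ss2); split => //; split; first by rewrite /= -E2.
  split.
    by move=> z; rewrite inE => /orP[/eqP ->|/M2].
  case: ss2 ne2 E2 M2 S2 => [//|b2 ss2] _ E2 M2 S2.
  rewrite /=; apply/andP; split => //.
  have [_ [[z [zr [Eb _]]] _]] := matches_good (M2 b2 (mem_head _ _)).
  subst b2; move: E2 => /= -[<- _].
  by rewrite gapr_cons.
- move: U; rewrite /= cat_uniq => /and3P[U1 D U2].
  have disj a : a \in ptypes P1 -> a \in ptypes P2 -> False.
    by move=> a1 a2; move/hasP: D; apply; exists a.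
  have spl := @split_first _ (fun a b => isPred (PSeq P1 P2) (ty a) (ty b))
     (fun a b => ty b \notin ptypes P1) x r tp.
  have Q1x : ty x \in ptypes P1 by rewrite Hs; exact: pstart_in.
  case: spl => [p | [b' [y [c' [Er [p1 [p2 [p3 p4]]]]]]]].
    have st : forall a b, ty a \in ptypes P1 ->
      isPred (PSeq P1 P2) (ty a) (ty b) && ~~ (ty b \notin ptypes P1) ->
      isPred (PSeq P1 P2) (ty a) (ty b) && (ty b \in ptypes P1).
      by move=> a b _; rewrite negbK.
    have /andP[_] := @path_closed2 _ _ _ (fun a => ty a \in ptypes P1) x r Q1x p st.
    by rewrite He => /disj H; exfalso; apply: H; exact: pend_in.
  subst r; have [c1 j c2] := incr_split inc.
  have st1 : forall a b, ty a \in ptypes P1 ->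
      isPred (PSeq P1 P2) (ty a) (ty b) && ~~ (ty b \notin ptypes P1) ->
      isPred P1 (ty a) (ty b) && (ty b \in ptypes P1).
    move=> a b Qa /andP[]; rewrite negbK => Hab Qb; rewrite Qb andbT.
    case: (seq_cases Hab) => [[_ Eb]|//|H].
      by exfalso; apply: (disj (ty b)) => //; rewrite Eb pstart_in.
    by exfalso; case/andP: (isPred_types H) => /(disj _ Qa).
  have /andP[pp1 Ql] := @path_closed2 _ _ _ (fun a => ty a \in ptypes P1) x b' Q1x p1 st1.
  have [l1 sy] : ty (last x b') = pend P1 /\ ty y = pstart P2.
    case: (seq_cases p2) => [//|H|H].
      by case/andP: (isPred_types H) => _ H'; rewrite H' in p3.
    by exfalso; case/andP: (isPred_types H) => /(disj _ Ql).
  have Q2y : ty y \in ptypes P2 by rewrite sy pstart_in.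
  have st2 : forall a b, ty a \in ptypes P2 ->
      isPred (PSeq P1 P2) (ty a) (ty b) ->
      isPred P2 (ty a) (ty b) && (ty b \in ptypes P2).
    move=> a b Qa Hab.
    case: (seq_cases Hab) => [[Ea _]|H|H].
    + by exfalso; apply: (disj (ty a)) => //; rewrite Ea pend_in.
    + by exfalso; case/andP: (isPred_types H) => /disj H1 _; exact: H1 Qa.
    + by rewrite H; case/andP: (isPred_types H).
  have /andP[pp2 _] := @path_closed2 _ _ _ (fun a => ty a \in ptypes P2) y c' Q2y p4 st2.
  exists (x :: b'), (y :: c'); split => //; split.
    apply: IH1 => //; split; first by move=> z zi; apply: Hi; rewrite -cat_cons mem_cat zi.
    by split; [exists x, b' | split].
  split => //; apply: IH2 => //; split.
    by move=> z zi; apply: Hi; rewrite -cat_cons mem_cat zi orbT.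
  by split; [exists y, c'; split => //; move: He; rewrite last_cat | split].
Qed.

Lemma lang P s : uniq (ptypes P) -> (matches ty tm I P s <-> good P s).
Proof. by move=> U; split; [apply: matches_good | apply: good_matches]. Qed.

End Lang.

Section Algo.
Variables (T Ev : eqType) (ty : Ev -> T) (tm : Ev -> rat) (P : pat T) (I : seq Ev).
Hypothesis uI : uniq I.
Hypothesis sI : sorted (fun a b => (tm a <= tm b)%R) I.

Local Notation sub := (subtrend ty tm I P).

Lemma sub_last e p s : sub e s -> sub p s -> e = p.
Proof.
move=> [_ [[e1 [r [E1 [_ L1]]]] _]] [_ [[e2 [r2 [E2 [_ L2]]]] _]].
by rewrite E1 in E2; case: E2 => ? ?; subst.
Qed.

Lemma sub_inI e s : sub e s -> e \in I.
Proof.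
move=> [Hi [[e1 [r [E1 [_ L1]]]] _]]; apply: Hi; rewrite E1 -L1; exact: mem_last.
Qed.

Lemma sub_dec e s : sub e s <->
  (s = [:: e] /\ ty e = pstart P /\ e \in I) \/
  exists p t, [/\ sub p t, isPred P (ty p) (ty e), (tm p < tm e)%R, e \in I & s = rcons t e].
Proof.
split.
  move=> S; have eI := sub_inI S; move: S.
  move=> [Hi [[e1 [r [Es [Hs He]]]] [inc tp]]]; subst s.
  case/lastP: r He inc tp Hi => [|r' z] He inc tp Hi.
    by left; rewrite /= in He; subst e1.
  rewrite last_rcons in He; subst z.
  move: inc tp; rewrite /incr /= !rcons_path => /andP[i1 i2] /andP[t1 t2].
  right; exists (last e1 r'), (e1 :: r'); split => //.
  split.
    by move=> x xi; apply: Hi; rewrite -rcons_cons mem_rcons inE xi orbT.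
  by split; [exists e1, r' | split].
case=> [[-> [Hs eI]]|[p [t [[Hi [[e1 [r [Et [Hs He]]]] [inc tp]]] Hp Ht eI ->]]]].
  split; first by move=> x; rewrite inE => /eqP ->.
  by split; [exists e, [::] | split].
subst t; split.
  by move=> x; rewrite mem_rcons inE => /orP[/eqP ->|/Hi].
split; first by exists e1, (rcons r e); rewrite last_rcons.
move: inc tp; rewrite /incr /= !rcons_path => -> ->; by rewrite He Hp Ht.
Qed.

Definition Inv (J : seq Ev) (st : seq (Ev * nat) * nat) :=
  [/\ uniq (map fst st.1),
      forall e c, (e, c) \in st.1 -> e \in J /\ counts (sub e) c,
      forall e s, e \in J -> sub e s -> e \in map fst st.1 &
      counts (fun s => exists e, [/\ e \in J, ty e = pend P & sub e s]) st.2].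

Lemma inv0 : Inv [::] ([::], 0).
Proof. by split => //; apply: counts0 => s [e []]. Qed.

Lemma inv_step J e K st : I = J ++ e :: K -> Inv J st ->
  Inv (rcons J e) (step ty tm P st e).
Proof.
move=> EI; case: st => V f [/= U A B C].
have eI : e \in I by rewrite EI mem_cat mem_head orbT.
have eJ : e \notin J.
  by move: uI; rewrite EI cat_uniq => /and3P[_ /hasPn H _]; apply: H; rewrite mem_head.
have before : forall p, p \in I -> (tm p < tm e)%R -> p \in J.
  move=> p; rewrite EI mem_cat => /orP[//|]; rewrite inE => /orP[/eqP->|pK].
    by rewrite ltxx.
  have : sorted (fun a b => (tm a <= tm b)%R) (e :: K).
    by move: sI; rewrite EI => /cat_sorted2[_ ->].
  rewrite /= path_sortedE; last by move=> a b c; apply: le_trans.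
  by case/andP => /allP /(_ p pK) H _; rewrite ltNge H.
set Pr := [seq p <- V | isPred P (ty p.1) (ty e) && (tm p.1 < tm e)%R].
have subE : forall s, sub e s <-> (s = [:: e] /\ ty e = pstart P) \/
    exists p c, (p, c) \in Pr /\ (exists t, sub p t /\ s = rcons t e).
  move=> s; split.
    case/sub_dec => [[-> [-> _]]|[p [t [Sp Hp Ht _ ->]]]]; first by left.
    right; have pJ := before p (sub_inI Sp) Ht.
    case/mapP: (B p t pJ Sp) => [[p' c]] pin /= Ep; subst p'.
    exists p, c; split; last by exists t.
    by rewrite mem_filter /= Hp Ht pin.
  case=> [[-> Hs]|[p [c [pin [t [Sp ->]]]]]]; apply/sub_dec; first by left.
  move: pin; rewrite mem_filter /= => /andP[/andP[Hp Ht] _].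
  by right; exists p, t; split.
have uPr : uniq (map fst Pr).
  by apply: subseq_uniq U; apply: map_subseq; apply: filter_subseq.
have cnt : counts (sub e) ((ty e == pstart P) + sumn (map snd Pr)).
  have C1 : counts (fun s => s = [:: e] /\ ty e = pstart P) (ty e == pstart P).
    case: eqP => H.
      by apply: counts_ext (counts1 [:: e]) => s; split => [->|[]].
    by apply: counts0 => s [].
  have C2 := @counts_sum _ sub Pr uPr
    (fun p c pin => (A p c (mem_subseq (filter_subseq _ _) pin)).2) sub_last.
  have C3 := @counts_map _ _ (fun t => rcons t e) _
    (fun t1 t2 E => congr1 fst (rcons_inj E)) C2.
  apply: counts_ext (counts_union C1 C3 _).
    move=> s; split.
      case=> [H|[t [[p [c [pin Sp]]] ->]]]; apply/subE; first by left.
      by right; exists p, c; split => //; exists t.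
    move/subE => [H|[p [c [pin [t [Sp ->]]]]]]; first by left.
    by right; exists t; split => //; exists p, c.
  move=> s [-> _] [t [[p [c [_ [_ [[e1 [r [-> _]]] _]]]]]]].
  by rewrite rcons_cons => -[_] /(congr1 size); rewrite size_rcons.
rewrite /step /= -/Pr.
case: ifP => [add|nadd].
  split => /=.
  - rewrite U andbT; apply/mapP => [[[e' c'] ecV /= Ee]]; subst e'.
    by move/negP: eJ; apply; case: (A _ _ ecV).
  - move=> e' c'; rewrite inE => /orP[/eqP[-> ->]|H].
      by rewrite mem_rcons mem_head.
    by have [h1 h2] := A _ _ H; rewrite mem_rcons inE h1 orbT.
  - move=> e' s; rewrite mem_rcons inE => /orP[/eqP->|H] S; rewrite inE ?eqxx //.
    by rewrite (B _ _ H S) orbT.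
  - case: eqP => Hend.
      apply: counts_ext (counts_union C cnt _).
        move=> s; split.
          case=> [[e' [e'J He' Se']]|Se]; first by exists e'; rewrite mem_rcons inE e'J orbT.
          by exists e; rewrite mem_rcons mem_head.
        case=> e' []; rewrite mem_rcons inE => /orP[/eqP->|e'J] He' Se'; first by right.
        by left; exists e'.
      move=> s [e' [e'J _ Se']] Se; have Ee := sub_last Se Se'; subst e'.
      by rewrite e'J in eJ.
    apply: counts_ext C => s; split.
      by case=> e' [e'J He' Se']; exists e'; rewrite mem_rcons inE e'J orbT.
    case=> e' []; rewrite mem_rcons inE => /orP[/eqP->|e'J] He' Se'; first by [].
    by exists e'.
have noS : forall s, ~ sub e s.
  move=> s /subE [[_ Hs]|[p [c [pin _]]]]; first by rewrite Hs eqxx in nadd.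
  have Pn : Pr != [::] by apply/eqP => E; rewrite E in pin.
  by rewrite Pn orbT in nadd.
split => //=.
- move=> e' c' H; have [h1 h2] := A _ _ H; by rewrite mem_rcons inE h1 orbT.
- move=> e' s; rewrite mem_rcons inE => /orP[/eqP->|H] S; first by case: (noS _ S).
  exact: B H S.
- apply: counts_ext C => s; split.
    by case=> e' [e'J He' Se']; exists e'; rewrite mem_rcons inE e'J orbT.
  case=> e' []; rewrite mem_rcons inE => /orP[/eqP->|e'J] He' Se'; first by case: (noS _ Se').
  by exists e'.
Qed.

Lemma inv_fold K J st : I = J ++ K -> Inv J st -> Inv I (foldl (step ty tm P) st K).
Proof.
elim: K J st => [|e K IH] J st EI Hinv /=.
  by move: Hinv; rewrite EI cats0.
apply: (IH (rcons J e)); first by rewrite cat_rcons.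
exact: inv_step EI Hinv.
Qed.

End Algo.

Theorem theorem4 (T Ev : eqType) (ty : Ev -> T) (tm : Ev -> rat)
  (P : pat T) (I : seq Ev) :
  uniq (ptypes P) ->
  uniq I ->
  (forall e, e \in I -> (0 <= tm e)%R) ->
  sorted (fun a b => (tm a <= tm b)%R) I ->
  (forall e c, (e, c) \in (greta ty tm P I).1 ->
     counts (subtrend ty tm I P e) c) /\
  counts (matches ty tm I P) (greta ty tm P I).2.
Proof.
move=> U uI _ sI.
have [_ A _ C] := @inv_fold T Ev ty tm P I uI sI I [::] ([::], 0) erefl (inv0 ty tm P I).
split; first by move=> e c H; case: (A e c H).
apply: counts_ext C => s; split.
  case=> e [eI He [Hi [[e1 [r [Es [Hs Hl]]]] [inc tp]]]].
  apply: (good_matches U).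
  by split => //; split; [exists e1, r; rewrite Hl | split].
move/matches_good => [Hi [[e1 [r [Es [Hs Hl]]]] [inc tp]]].
exists (last e1 r); split => //.
  by apply: Hi; rewrite Es; exact: mem_last.
by split => //; split; [exists e1, r | split].
Qed.
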